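(* Let $(E,\mu)$ and $(F,\nu)$ be fuzzy Riesz spaces and let $T:E\rightarrow F$ be a fuzzy Riesz homomorphism, with kernel $\mathrm{Ker}(T)=\{x\in E: Tx=0\}$. Then: (1) For $x\in E$: $\nu(0,Tx)>\frac12$ if and only if there exists $z\in \mathrm{Ker}(T)$ with $\mu(0,z)>\frac12$ and $\mu(0,x+z)>\frac12$. Consequently, for $x,y\in E$: $\nu(Ty,Tx)>\frac12$ if and only if there exists $w\in E$ with $\mu(x,w)>\frac12$, $\mu(y,w)>\frac12$ and $Tw=Tx$. (2) For $x,y\in E$: $\nu(|Tx|,|Ty|)>\frac12$ if and only if there exists $w\in \mathrm{Ker}(T)$ with $\mu(|w|,|x|)>\frac12$ and $\mu(|x-w|,|y|)>\frac12$.
   Context: A fuzzy order on a real vector space $E$ is a map $\mu:E\times E\to[0,1]$ with $\mu(x,x)=1$ for all $x$; $\mu(x,y)+\mu(y,x)>1$ implies $x=y$; and $\mu(x,z)\ge\sup_{y\in E}\min(\mu(x,y),\mu(y,z))$. Write $x\le y$ for $\mu(x,y)>\frac12$. For $A\subseteq E$, $y$ is an upper bound of $A$ if $x\le y$ for all $x\in A$; $z=\sup A$ if $z$ is an upper bound of $A$ and $z\le y$ for every upper bound $y$ of $A$; lower bounds and $\inf$ are defined dually. $(E,\mu)$ is a fuzzy ordered linear space if $\mu(x_1,x_2)>\frac12$ implies $\mu(x_1,x_2)\le\mu(x_1+x,x_2+x)$ for all $x\in E$ and $\mu(x_1,x_2)\le\mu(\alpha x_1,\alpha x_2)$ for all real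 $\alpha>0$. It is a fuzzy Riesz space if in addition $x\vee y=\sup\{x,y\}$ and $x\wedge y=\inf\{x,y\}$ exist for all $x,y$. Put $x^+=x\vee 0$, $x^-=(-x)\vee0$, $|x|=x\vee(-x)$. A fuzzy Riesz homomorphism between fuzzy Riesz spaces is a linear map $T$ with $T(x\vee y)=Tx\vee Ty$ for all $x,y$. *)

(* Defs.v *)
From HB Require Import structures.
From mathcomp Require Import all_boot all_order all_algebra.
From mathcomp Require Import reals.
Set Implicit Arguments. Unset Strict Implicit. Unset Printing Implicit Defensive.
Import Order.TTheory GRing.Theory Num.Theory.
Local Open Scope ring_scope.

Section FuzzyRiesz.
Variables (R : realType) (E : lmodType R).
Implicit Types (mu : E -> E -> R) (A : E -> Prop).

(* fuzzy order: values in [0,1], reflexive, antisymmetric, (sup-min) transitive.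
   "mu x z >= sup_y min (mu x y) (mu y z)" is written out as: mu x z is an
   upper bound of all the min (mu x y) (mu y z) (the sup exists since all
   values lie in [0,1]). *)
Definition fuzzy_order mu : Prop :=
  [/\ (forall x y, 0 <= mu x y <= 1),
      (forall x, mu x x = 1),
      (forall x y, 1 < mu x y + mu y x -> x = y) &
      (forall x y z, Num.min (mu x y) (mu y z) <= mu x z)].

Definition fle mu x y : Prop := 1 / 2 < mu x y.

Definition is_upper mu A y : Prop := forall x, A x -> fle mu x y.
Definition is_lower mu A y : Prop := forall x, A x -> fle mu y x.
Definition is_sup mu A z : Prop :=
  is_upper mu A z /\ forall y, is_upper mu A y -> fle mu z y.
Definition is_inf mu A z : Prop :=
  is_lower mu A z /\ forall y, is_lower mu A y -> fle mu y z.

Definition pair_set (x y : E) : E -> Prop := fun t => t = x \/ t = y.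

Definition fuzzy_ordered_linear mu : Prop :=
  fuzzy_order mu /\
  forall x1 x2, fle mu x1 x2 ->
    (forall x, mu x1 x2 <= mu (x1 + x) (x2 + x)) /\
    (forall a : R, 0 < a -> mu x1 x2 <= mu (a *: x1) (a *: x2)).

Definition fuzzy_riesz mu (join meet : E -> E -> E) : Prop :=
  [/\ fuzzy_ordered_linear mu,
      (forall x y, is_sup mu (pair_set x y) (join x y)) &
      (forall x y, is_inf mu (pair_set x y) (meet x y))].

Definition fpos (join : E -> E -> E) x := join x 0.
Definition fneg (join : E -> E -> E) x := join (- x) 0.
Definition fabs (join : E -> E -> E) x := join x (- x).

End FuzzyRiesz.

Definition fuzzy_riesz_hom (R : realType) (E F : lmodType R)
  (joinE : E -> E -> E) (joinF : F -> F -> F) (T : {linear E -> F}) : Prop :=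
  forall x y, T (joinE x y) = joinF (T x) (T y).

(* Main.v *)
Require Import Defs.
From HB Require Import structures.
From mathcomp Require Import all_boot all_order all_algebra.
From mathcomp Require Import reals.
From mathcomp Require Import lra.
Import Order.TTheory GRing.Theory Num.Theory.
Local Open Scope ring_scope.
Set Implicit Arguments. Unset Strict Implicit.

Section FR.
Variables (R : realType) (E : lmodType R) (mu : E -> E -> R) (join meet : E -> E -> E).
Hypothesis h : fuzzy_riesz mu join meet.

Lemma fl_refl x : 1 / 2 < mu x x.
Proof. case: h => [[[_ H1 _ _] _] _ _]; rewrite H1; lra. Qed.

Lemma fl_trans x y z : 1 / 2 < mu x y -> 1 / 2 < mu y z -> 1 / 2 < mu x z.
Proof.
case: h => [[[_ _ _ H] _] _ _]; move=> a b.
apply: (lt_le_trans _ (H x y z)). by rewrite lt_min a b.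
Qed.

Lemma fl_anti x y : 1 / 2 < mu x y -> 1 / 2 < mu y x -> x = y.
Proof. case: h => [[[_ _ H _] _] _ _]; move=> a b; apply H; lra. Qed.

Lemma fl_add x y z : 1 / 2 < mu x y -> 1 / 2 < mu (x + z) (y + z).
Proof.
case: h => [[_ H] _ _] a. apply: (lt_le_trans a).
by case: (H _ _ a) => H1 _; apply H1.
Qed.

Lemma fl_scale x y (c : R) : 0 < c -> 1 / 2 < mu x y -> 1 / 2 < mu (c *: x) (c *: y).
Proof.
case: h => [[_ H] _ _] hc a. apply: (lt_le_trans a).
by case: (H _ _ a) => _ H1; apply H1.
Qed.

Lemma fl_opp x y : 1 / 2 < mu x y -> 1 / 2 < mu (- y) (- x).
Proof.
move=> H; have := fl_add (- x - y) H.
by rewrite addrA subrr add0r addrCA subrr addr0.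
Qed.

Lemma fl_L1 a b c : 1 / 2 < mu b (a - c) -> 1 / 2 < mu c (a - b).
Proof.
move=> H; have := fl_add (c - b) H.
by rewrite addrCA subrr addr0 addrA subrK.
Qed.

Lemma fl_L2 a b c : 1 / 2 < mu (a - b) c -> 1 / 2 < mu (a - c) b.
Proof.
move=> H; have := fl_add (b - c) H.
by rewrite addrA subrK addrCA subrr addr0.
Qed.

Lemma fl_L4 a b c : 1 / 2 < mu a (b + c) -> 1 / 2 < mu (a - b) c.
Proof.
move=> H; have := fl_add (- b) H.
by rewrite [b + c]addrC addrK.
Qed.

Lemma ub1 x y : 1 / 2 < mu x (join x y).
Proof. case: h => [_ H _]; case: (H x y) => U _; apply U; by left. Qed.
Lemma ub2 x y : 1 / 2 < mu y (join x y).
Proof. case: h => [_ H _]; case: (H x y) => U _; apply U; by right. Qed.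
Lemma lub x y z : 1 / 2 < mu x z -> 1 / 2 < mu y z -> 1 / 2 < mu (join x y) z.
Proof. case: h => [_ H _] a b; case: (H x y) => _ L; apply L => t [->|->] //. Qed.

Lemma join_eq x y : 1 / 2 < mu x y -> join x y = y.
Proof. move=> H; apply: fl_anti; [exact: lub H (fl_refl _)| exact: ub2]. Qed.
Lemma join_eql x y : 1 / 2 < mu y x -> join x y = x.
Proof. move=> H; apply: fl_anti; [exact: lub (fl_refl _) H| exact: ub1]. Qed.

Lemma abs_ge x : 1 / 2 < mu x (fabs join x).
Proof. exact: ub1. Qed.
Lemma abs_geN x : 1 / 2 < mu (- x) (fabs join x).
Proof. exact: ub2. Qed.

Lemma abs_ge0 x : 1 / 2 < mu 0 (fabs join x).
Proof.
have H1 : 1 / 2 < mu (x + - x) (fabs join x + fabs join x).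
  apply: fl_trans (fl_add _ (abs_ge x)) _.
  rewrite ![fabs join x + _]addrC; exact: fl_add (abs_geN x).
rewrite subrr in H1.
have := fl_scale (c := 1/2) ltac:(lra) H1.
rewrite scaler0 scalerDr -scalerDl; have -> : (1/2 + 1/2 : R) = 1 by lra.
by rewrite scale1r.
Qed.

Lemma le_meet x a c : 1 / 2 < mu c x -> 1 / 2 < mu c a -> 1 / 2 < mu c (x + a - join x a).
Proof.
move=> h1 h2; apply: fl_L1; apply: lub; apply: fl_L1.
  by rewrite [x + a]addrC addrK.
by rewrite addrK.
Qed.

Lemma meet_lel x a : 1 / 2 < mu (x + a - join x a) x.
Proof. apply: fl_L2; rewrite [x + a]addrC addrK; exact: ub2. Qed.
Lemma meet_ler x a : 1 / 2 < mu (x + a - join x a) a.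
Proof. apply: fl_L2; rewrite addrK; exact: ub1. Qed.

End FR.

Theorem theorem2p2 (R : realType) (E F : lmodType R)
  (mu : E -> E -> R) (joinE meetE : E -> E -> E)
  (nu : F -> F -> R) (joinF meetF : F -> F -> F)
  (hE : fuzzy_riesz mu joinE meetE) (hF : fuzzy_riesz nu joinF meetF)
  (T : {linear E -> F}) (hT : fuzzy_riesz_hom joinE joinF T) :
  ((forall x : E,
      1 / 2 < nu 0 (T x) <->
      exists z : E, [/\ T z = 0, 1 / 2 < mu 0 z & 1 / 2 < mu 0 (x + z)]) /\
   (forall x y : E,
      1 / 2 < nu (T y) (T x) <->
      exists w : E, [/\ 1 / 2 < mu x w, 1 / 2 < mu y w & T w = T x])) /\
  (forall x y : E,
      1 / 2 < nu (fabs joinF (T x)) (fabs joinF (T y)) <->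
      exists w : E, [/\ T w = 0,
        1 / 2 < mu (fabs joinE w) (fabs joinE x) &
        1 / 2 < mu (fabs joinE (x - w)) (fabs joinE y)]).
Proof.
have Tmono x y : 1 / 2 < mu x y -> 1 / 2 < nu (T x) (T y).
  move=> H; rewrite -(join_eq hE H) hT; eapply ((ub1 hF (T x) (T y))).
have Tabs x : T (fabs joinE x) = fabs joinF (T x).
  by rewrite /fabs hT linearN.
split; [split|].
- move=> x; split.
  + move=> H; exists (joinE (- x) 0); split.
    * rewrite hT linearN linear0; rewrite (join_eq hF) //.
      by have := fl_opp hF H; rewrite oppr0.
    * exact ((ub2 hE (-x) 0)).
    * have := fl_add hE x (ub1 hE (- x) 0).
      by rewrite addNr addrC.
  + case=> z [Tz _ H]; have := Tmono _ _ H.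
    by rewrite linear0 linearD Tz addr0.
- move=> x y; split.
  + move=> H; exists (joinE x y); split.
    * exact ((ub1 hE x y)).
    * exact ((ub2 hE x y)).
    * by rewrite hT (join_eql hF H).
  + case=> w [_ H Tw]; rewrite -Tw; exact (Tmono _ _ H).
- move=> x y; split; last first.
    case=> w [Tw _ H]; have := Tmono _ _ H.
    by rewrite !Tabs linearB Tw subr0.
  move=> H.
  set a := fabs joinE y.
  set m := x + a - joinE x a.
  set t := joinE m (- a).
  have Ta : T a = fabs joinF (T y) by rewrite /a Tabs.
  have hx1 : 1 / 2 < nu (T x) (T a).
    rewrite Ta; exact (fl_trans hF (abs_ge hF _) H).
  have hx2 : 1 / 2 < nu (- T a) (T x).
    have := fl_opp hF (fl_trans hF (abs_geN hF _) H).
    by rewrite opprK Ta.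
  have hya : 1 / 2 < mu (- a) a.
    eapply (fl_trans hE (y := y)); last exact (abs_ge hE y).
    by have := fl_opp hE (abs_geN hE y); rewrite opprK.
  have a0 : 1 / 2 < mu 0 a := abs_ge0 hE y.
  exists (x - t); split.
  + rewrite linearB.
    have -> : T t = T x by rewrite /t (hT m (- a)) linearN /m linearB linearD (hT x a) (join_eq hF hx1) addrK (join_eql hF hx2).
    by rewrite subrr.
  + eapply (lub hE).
    * eapply (fl_L2 hE); eapply (fl_trans hE (y := m)); last exact (ub1 hE m (- a)).
      rewrite /m; eapply (le_meet hE).
        have := fl_add hE x (fl_opp hE (abs_ge0 hE x)).
        by rewrite oppr0 add0r addrC.
      eapply (fl_trans hE (y := 0)); last exact a0.
      by have := fl_add hE (- fabs joinE x) (abs_ge hE x); rewrite subrr.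
    * rewrite opprB; eapply (fl_L4 hE); eapply (lub hE).
        eapply (fl_trans hE (meet_lel hE x a)).
        by have := fl_add hE x (abs_ge0 hE x); rewrite add0r addrC.
      eapply (fl_trans hE (y := 0)).
        by have := fl_opp hE a0; rewrite oppr0.
      by have := fl_add hE x (abs_geN hE x); rewrite addNr addrC.
  + rewrite subKr; eapply (lub hE).
    * eapply (lub hE); [exact (meet_ler hE x a) | exact hya].
    * have := fl_opp hE (ub2 hE m (- a)); by rewrite opprK.
Qed.
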